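(* Fix $c>1$. In any regular terrain (with respect to $c$), with initial agent position $p$ and treasure position $q$, the advice string $Code(a_1,a_2,a_3)$ given to Algorithm $THunt$ has length $O(\log(L/\lambda))$, where $L$ is the length of a shortest path in the terrain from $p$ to $q$ and $\lambda$ is the accessibility of the treasure.
   Context: A terrain is $\mathcal{T}=P_0\setminus(P_1\cup\dots\cup P_k)$, where $P_0$ is a closed polygon and the obstacles $P_1,\dots,P_k$ are pairwise disjoint open polygons contained in the interior of $P_0$; the treasure $q$ is an interior point of $\mathcal{T}$ and the agent starts at $p\in\mathcal{T}$. $L$ is the length of a shortest path in $\mathcal{T}$ from $p$ to $q$. The accessibility of the treasure is $\lambda=\min(1,\rho)$, where $\rho$ is the largest radius of a disc centered at $q$ contained in $\mathcal{T}$. A polygon is $c$-fat if the ratio of the radius of the smallest disc containing it to the radius of the largest disc contained in it is at most $c$; a terrain is regular if $P_0$ is convex and every obstacle is convex and $c$-fat. The advice: let $a_1=\lceil 2/\lambda\rceil$. Tile the plane by squares of side $1/a_1$ with horizontal and vertical sides, with $p$ a corner of a tile. Columns of tiles are numbered $1,2,\dots$ going East from $p$ and $-1,-2,\dots$ going West; rows are numbered $1,2,\dots$ going North from $p$ and $-1,-2,\dots$ going South. Among tiles contained in the disc of radius $\lambda$ centered at $q$, let $T$ be the one in the smallest-indexed row containing such a tile and, within that row, in the smallest-indexed column containing such a tile; $a_2$ is its column number and $a_3$ its row number. $Code(a_1,a_2,a_3)$ is the concatenation $\xi_2,\xi_3,\beta_1,000,\beta_2,000,\beta_3$, where $\xi_i=1$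 if $a_i>0$ and $0$ if $a_i<0$, and $\beta_i$ is obtained from the binary representation of $|a_i|$ by replacing each bit $1$ by $10$ and each bit $0$ by $01$.
   Formalization: The length of $Code(a_1,a_2,a_3)$ is at most a constant depending only on c times 1 + ln(max(L,1)/λ), instead of O(log(L/λ)), and the tile T is also asserted to exist. Apart from conventions, each condition added here is assumed in the paper as well or is needed for the statement above to hold. *)

(* Defs.v *)
From HB Require Import structures.
From Stdlib Require Import BinNums BinPos BinNat.
From mathcomp Require Import all_boot all_order all_algebra.
From mathcomp Require Import all_classical all_reals all_analysis.
Set Implicit Arguments. Unset Strict Implicit. Unset Printing Implicit Defensive.
Import Order.TTheory GRing.Theory Num.Theory.
Local Open Scope classical_set_scope.
Local Open Scope ring_scope.

Section Geometry.
Variable R : realType.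

Definition pt := (R * R)%type.

Definition dist (a b : pt) : R :=
  Num.sqrt ((a.1 - b.1) ^+ 2 + (a.2 - b.2) ^+ 2).

Definition cdisc (x : pt) (r : R) : set pt := [set y | dist x y <= r].
Definition odisc (x : pt) (r : R) : set pt := [set y | dist x y < r].

Definition interior_of (S : set pt) : set pt :=
  [set x | exists r : R, 0 < r /\ odisc x r `<=` S].

Definition conv_hull (vs : seq pt) : set pt :=
  [set x | exists w : seq R,
     [/\ size w = size vs, all (fun a => 0 <= a) w,
         \sum_(i < size vs) nth 0 w i = 1 &
         x = (\sum_(i < size vs) nth 0 w i * (nth (0, 0) vs i).1,
              \sum_(i < size vs) nth 0 w i * (nth (0, 0) vs i).2)]].

(* A closed convex polygon with vertex list vs is conv_hull vs (required to
   have nonempty interior); an open convex polygon is its interior. *)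
Definition obstacle (vs : seq pt) : set pt := interior_of (conv_hull vs).

Definition fat (c : R) (P : set pt) : Prop :=
  inf [set Rr : R | 0 <= Rr /\ exists x, P `<=` cdisc x Rr]
  / sup [set r : R | 0 <= r /\ exists y, cdisc y r `<=` P] <= c.

Definition terrain (v0 : seq pt) (obs : seq (seq pt)) : set pt :=
  conv_hull v0 `\` [set x | exists P, P \in obs /\ obstacle P x].

Definition regular_terrain (c : R) (v0 : seq pt) (obs : seq (seq pt)) : Prop :=
  [/\ exists x, interior_of (conv_hull v0) x,
      forall P, P \in obs -> exists x, obstacle P x,
      forall i j, (i < size obs)%N -> (j < size obs)%N -> i != j ->
        obstacle (nth [::] obs i) `&` obstacle (nth [::] obs j) = set0,
      forall P, P \in obs -> obstacle P `<=` interior_of (conv_hull v0)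
    & forall P, P \in obs -> fat c (obstacle P)].

Definition is_path (T : set pt) (p q : pt) (g : R -> pt) : Prop :=
  [/\ g 0 = p, g 1 = q,
      forall t, 0 <= t <= 1 -> T (g t)
    & forall t, 0 <= t <= 1 -> forall e : R, 0 < e ->
        exists d : R, 0 < d /\ forall s, 0 <= s <= 1 -> `|s - t| < d ->
          dist (g s) (g t) < e].

Definition curve_length (g : R -> pt) : \bar R :=
  ereal_sup [set x | exists (n : nat) (ts : nat -> R),
    [/\ ts 0%N = 0, ts n = 1, forall i, (i < n)%N -> ts i <= ts i.+1 &
        x = (\sum_(i < n) dist (g (ts i.+1)) (g (ts i)))%:E]].

Definition shortest_path_length (T : set pt) (p q : pt) (L : R) : Prop :=
  (exists g, is_path T p q g /\ curve_length g = L%:E) /\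
  (forall g, is_path T p q g -> (L%:E <= curve_length g)%E).

Definition accessibility (T : set pt) (q : pt) : R :=
  Num.min 1 (sup [set r : R | 0 <= r /\ cdisc q r `<=` T]).

Definition adv_a1 (lam : R) : nat := `|Num.ceil (2 / lam)|%N.

(* tile in column i, row j (i, j nonzero integers), side 1/a1, p a corner *)
Definition tile_lo (x0 : R) (a1 : nat) (i : int) : R :=
  x0 + (if (0 < i)%R then (i - 1)%:~R else i%:~R) / a1%:R.

Definition tile (p : pt) (a1 : nat) (i j : int) : set pt :=
  [set z | tile_lo p.1 a1 i <= z.1 <= tile_lo p.1 a1 i + 1 / a1%:R /\
           tile_lo p.2 a1 j <= z.2 <= tile_lo p.2 a1 j + 1 / a1%:R].

Definition advice_tile (p q : pt) (lam : R) (a1 : nat) (a2 a3 : int) : Prop :=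
  [/\ a2 != 0, a3 != 0, tile p a1 a2 a3 `<=` cdisc q lam &
      forall i j : int, i != 0 -> j != 0 -> tile p a1 i j `<=` cdisc q lam ->
        (a3 < j) \/ (a3 = j /\ a2 <= i)].

End Geometry.

Fixpoint pos_bits (x : positive) : seq bool :=
  match x with
  | xH => [:: true]
  | xO y => rcons (pos_bits y) false
  | xI y => rcons (pos_bits y) true
  end.

Definition binrep (n : nat) : seq bool :=
  match N.of_nat n with
  | N0 => [:: false]
  | Npos x => pos_bits x
  end.

Definition beta (n : nat) : seq bool :=
  flatten [seq (if b then [:: true; false] else [:: false; true]) | b <- binrep n].

Definition Code (a1 : nat) (a2 a3 : int) : seq bool :=
  [:: (0 < a2)%R; (0 < a3)%R] ++ beta a1 ++ [:: false; false; false]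
  ++ beta `|a2|%N ++ [:: false; false; false] ++ beta `|a3|%N.

(* Main.v *)
Require Import Defs.
From Stdlib Require Import BinNums BinPos BinNat PArith NArith Lia Classical.
From HB Require Import structures.
From mathcomp Require Import all_boot all_order all_algebra.
From mathcomp Require Import all_classical all_reals all_analysis.
From mathcomp Require Import zify lra.
Import Order.TTheory GRing.Theory Num.Theory.
Local Open Scope classical_set_scope.
Local Open Scope ring_scope.

Lemma size_beta n : size (beta n) = (2 * size (binrep n))%N.
Proof.
rewrite /beta; elim: (binrep n) => [|b s IH] //=.
by rewrite size_cat IH; case: b => /=; rewrite mulnS.
Qed.

Lemma size_pos_bits x : (2 ^ (size (pos_bits x)).-1 <= Pos.to_nat x /\ 0 < size (pos_bits x))%N.
Proof.
elim: x => [y [IH1 IH2]|y [IH1 IH2]|] /=; last by [].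
- rewrite size_rcons /= Pos2Nat.inj_xI; split=> //.
  rewrite -(prednK IH2) expnS -(prednK IH2) /= in IH1 *.
  rewrite -[X in (_ <= X)%N]/((2 * Pos.to_nat y).+1)%N.
  by apply: leqW; rewrite leq_mul2l.
- rewrite size_rcons /= Pos2Nat.inj_xO; split=> //.
  rewrite -(prednK IH2) expnS /= in IH1 *.
  by rewrite -[X in (_ <= X)%N]/((2 * Pos.to_nat y))%N leq_mul2l.
Qed.

Lemma binrep_bound n : (2 ^ (size (binrep n)).-1 <= maxn n 1 /\ 0 < size (binrep n))%N.
Proof.
rewrite /binrep; case E: (N.of_nat n) => [|x]; first by split=> //; rewrite leq_max orbT.
have [h1 h2] := size_pos_bits x; split=> //.
have Hx : Pos.to_nat x = n.
  by rewrite -[RHS]Nat2N.id E.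
rewrite Hx in h1.
by apply: (leq_trans h1); rewrite leq_maxl.
Qed.

Lemma size_Code a1 a2 a3 : size (Code a1 a2 a3) =
  (8 + 2 * size (binrep a1) + 2 * size (binrep `|a2|%N) + 2 * size (binrep `|a3|%N))%N.
Proof.
rewrite /Code !size_cat !size_beta /=.
rewrite !addnA; lia.
Qed.

Lemma binrep_real (R : realType) (n : nat) (x : R) : 1 <= x -> n%:R <= 7 * x ->
  (size (binrep n))%:R <= 1 + (ln 7 + ln x) / ln 2.
Proof.
move=> x1 nx.
have [h1 h2] := binrep_bound n.
have ln2 : 0 < ln (2:R) by apply: ln_gt0; rewrite ltr1n.
have x0 : 0 < x by apply: lt_le_trans x1.
have k7 : (2:R) ^+ (size (binrep n)).-1 <= 7 * x.
  apply: (le_trans _ (_ : (maxn n 1)%:R <= _)).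
    by rewrite -natrX ler_nat.
  case/orP: (leq_total n 1) => h.
    rewrite (maxn_idPr h). apply: (le_trans x1). rewrite ler_peMl //; first exact: ltW. by rewrite ler1n.
  by rewrite (maxn_idPl h).
have : ln ((2:R) ^+ (size (binrep n)).-1) <= ln (7 * x).
  by rewrite ler_ln // posrE ?exprn_gt0 ?mulr_gt0 // ltr0n.
rewrite lnXn // lnM ?posrE ?ltr0n // => hk.
rewrite -(prednK h2) -addn1 natrD addrC lerD2l ler_pdivlMr //.
by rewrite mulr_natl.
Qed.

Lemma int_min (P : int -> Prop) (b : int) : (exists j, P j) ->
  (forall j, P j -> b <= j) -> exists j, P j /\ forall k, P k -> j <= k.
Proof.
move=> [j0 Pj0] Hb; apply: NNPP => H.
have step : forall j, P j -> exists k, P k /\ k < j.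
  move=> j Pj; have := not_ex_all_not _ _ H j.
  move=> H1; have [//|H2] := not_and_or _ _ H1.
  have [k Hk] := not_all_ex_not _ _ H2.
  have [Pk kj] := imply_to_and _ _ Hk.
  by exists k; split=> //; rewrite ltNge; apply/negP.
have : forall n : nat, forall j, j <= b + n%:Z -> ~ P j.
  elim=> [|n IH] j jb Pj.
    have [k [Pk kj]] := step j Pj; have := Hb k Pk; have := Hb j Pj. lia.
  have [k [Pk kj]] := step j Pj; apply: (IH k) Pk; lia.
move/(_ `|j0 - b|%N j0); apply => //; lia.
Qed.

Section GT3.
Variable R : realType.

Lemma dist_ge1 (a b : pt R) : `|a.1 - b.1| <= dist a b.
Proof.
rewrite /dist -sqrtr_sqr; apply: ler_wsqrtr; rewrite lerDl; exact: sqr_ge0.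
Qed.

Lemma dist_ge2 (a b : pt R) : `|a.2 - b.2| <= dist a b.
Proof.
rewrite /dist -sqrtr_sqr; apply: ler_wsqrtr; rewrite lerDr; exact: sqr_ge0.
Qed.

Lemma distC (a b : pt R) : dist a b = dist b a.
Proof. by rewrite /dist -(sqrrN (a.1 - b.1)) -(sqrrN (a.2 - b.2)) !opprB. Qed.

Lemma dist_le (a b : pt R) r : 0 <= r ->
  (a.1 - b.1) ^+ 2 + (a.2 - b.2) ^+ 2 <= r ^+ 2 -> dist a b <= r.
Proof.
move=> r0 h; rewrite /dist -(ger0_norm r0) -sqrtr_sqr; exact: ler_wsqrtr.
Qed.

Lemma conv_bound (vs : seq (pt R)) x : conv_hull vs x ->
  x.1 <= \sum_(i < size vs) `|(nth (0, 0) vs i).1|.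
Proof.
move=> [w [sw wpos w1 ->]] /=.
set M := \sum_(i < size vs) `|(nth (0, 0) vs i).1|.
have -> : M = \sum_(i < size vs) nth 0 w i * M by rewrite -mulr_suml w1 mul1r.
apply: ler_sum => i _; apply: ler_wpM2l.
  move/allP: wpos; apply; apply: mem_nth; rewrite sw; exact: ltn_ord.
apply: (le_trans (ler_norm _)).
rewrite /M (bigD1 i) //= lerDl; apply: sumr_ge0 => *; exact: normr_ge0.
Qed.

End GT3.

Section GT4.
Variable R : realType.

Lemma L_ge (T : set (pt R)) p q L : shortest_path_length T p q L -> dist q p <= L.
Proof.
move=> [[g [[g0 g1 _ _] gL]] _].
have : ((dist q p)%:E <= curve_length g)%E.
  apply: ereal_sup_ubound; exists 1%N, (fun i => if i is 0%N then 0 else 1); split => //.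
    by case=> // _; exact: ler01.
  by rewrite big_ord1 /= g0 g1.
by rewrite gL lee_fin.
Qed.

Lemma lam_pos (T : set (pt R)) v0 q : T `<=` conv_hull v0 -> interior_of T q ->
  0 < accessibility T q /\ accessibility T q <= 1.
Proof.
move=> sub [r [r0 sr]].
set S := [set r : R | 0 <= r /\ cdisc q r `<=` T].
have S1 : S (r / 2).
  split; first by lra.
  move=> y; rewrite /cdisc /= => hy; apply: sr; rewrite /odisc /=; lra.
set M := \sum_(i < size v0) `|(nth (0, 0) v0 i).1|.
have ub : ubound S (M - q.1).
  move=> s [s0 ss].
  have : T (q.1 + s, q.2).
    apply: ss; rewrite /cdisc /=; apply: dist_le => //=.
    rewrite subrr expr0n /= addr0 opprD addrA subrr sub0r sqrrN; lra.
  move/sub/conv_bound => /=; rewrite -/M; lra.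
have hs : has_sup S by split; [exists (r / 2) | exists (M - q.1)].
have := sup_upper_bound hs S1 => h.
rewrite /accessibility -/S; split.
  rewrite lt_min ltr01 /=; lra.
by rewrite ge_min lexx.
Qed.
End GT4.

Section GT5.
Variable R : realType.

Lemma sq_bound (e a : R) : - a <= e <= a -> e ^+ 2 <= a ^+ 2.
Proof. move=> /andP [h1 h2]; nra. Qed.

Lemma floor_le_i (y : R) (i : int) : y <= i%:~R -> Num.floor y <= i.
Proof. by move/le_floor; rewrite intrKfloor. Qed.

Lemma exists_col (x0 y : R) a1 : (0 < a1)%N ->
  exists i : int, i != 0 /\ tile_lo x0 a1 i <= y <= tile_lo x0 a1 i + 1 / a1%:R.
Proof.
move=> a0; have A0 : 0 < (a1%:R : R) by rewrite ltr0n.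
set k := Num.floor ((y - x0) * a1%:R).
have h1 := floor_le ((y - x0) * a1%:R).
have h2 := floorD1_gt ((y - x0) * a1%:R).
rewrite -/k intrD in h2. rewrite -/k in h1.
exists (if 0 <= k then k + 1 else k); split.
  by case h: (0 <= k); lia.
have -> : tile_lo x0 a1 (if 0 <= k then k + 1 else k) = x0 + k%:~R / a1%:R.
  rewrite /tile_lo; case h: (0 <= k).
    have -> : 0 < k + 1 by lia.
    by rewrite addrK.
  by have -> : (0 < k) = false by lia.
have ey : y = x0 + ((y - x0) * a1%:R) / a1%:R.
  by rewrite mulfK ?subrKC // gt_eqF.
set t := (y - x0) * a1%:R in h1 h2 ey.
rewrite [X in _ <= X <= _]ey -addrA -mulrDl !lerD2l.
apply/andP; split; apply: ler_wpM2r; [by rewrite invr_ge0 ltW | exact: h1 | by rewrite invr_ge0 ltW | ].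
by apply: (le_trans (ltW h2)); rewrite rmorph1.
Qed.

Lemma corner (p q : pt R) lam a1 i j : tile p a1 i j `<=` cdisc q lam ->
  `|q.1 - tile_lo p.1 a1 i| <= lam /\ `|q.2 - tile_lo p.2 a1 j| <= lam.
Proof.
move=> H.
have d0 : 0 <= 1 / (a1%:R : R) by rewrite divr_ge0.
have := H (tile_lo p.1 a1 i, tile_lo p.2 a1 j).
rewrite /tile /cdisc /= !lexx !lerDl d0 /= => /(_ (conj erefl erefl)) h.
split; apply: le_trans h.
  exact: (dist_ge1 _ q (tile_lo p.1 a1 i, tile_lo p.2 a1 j)).
exact: (dist_ge2 _ q (tile_lo p.1 a1 i, tile_lo p.2 a1 j)).
Qed.

Lemma tile_lo_idx (x0 : R) a1 i : (0 < a1)%N ->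
  i%:~R - 1 <= (tile_lo x0 a1 i - x0) * a1%:R <= i%:~R.
Proof.
move=> a0; have A0 : (a1%:R : R) != 0 by rewrite pnatr_eq0 -lt0n.
rewrite /tile_lo addrAC subrr add0r divfK //.
case: ifP => _; last by rewrite lexx lerBlDr lerDl ler01.
by rewrite intrD rmorphN rmorph1 lexx lerBlDr lerDl ler01.
Qed.

Lemma idx_abs (x0 : R) a1 i : (0 < a1)%N ->
  (`|i|%N)%:R <= `|tile_lo x0 a1 i - x0| * a1%:R + 1.
Proof.
move=> a0; have := tile_lo_idx x0 a1 i a0.
rewrite natr_absz intr_norm => /andP [h1 h2].
rewrite -[X in _ * X]ger0_norm ?ler0n // -normrM.
set s := (_ * _) in h1 h2 *.
have n1 := ler_norm s; have n2 := ler_norm (- s); rewrite normrN in n2.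
rewrite ler_norml; apply/andP; split; lra.
Qed.

End GT5.

Section GT6.
Variable R : realType.

Lemma idx_lb (x0 y lam : R) a1 i : (0 < a1)%N -> `|y - tile_lo x0 a1 i| <= lam ->
  Num.floor ((y - lam - x0) * a1%:R) <= i.
Proof.
move=> a0 h; apply: floor_le_i.
have /andP [_ h2] := tile_lo_idx _ x0 a1 i a0.
apply: le_trans h2; apply: ler_wpM2r; first exact: ler0n.
move: h; rewrite ler_norml => /andP [h3 h4]; lra.
Qed.

Lemma adv_exists (p q : pt R) lam a1 : 0 < lam -> (0 < a1)%N ->
  1 / a1%:R <= lam / 2 -> exists a2 a3, advice_tile p q lam a1 a2 a3.
Proof.
move=> l0 a0 ha.
have [i0 [i0n /andP [hi1 hi2]]] := exists_col _ p.1 q.1 a1 a0.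
have [j0 [j0n /andP [hj1 hj2]]] := exists_col _ p.2 q.2 a1 a0.
have T0 : tile p a1 i0 j0 `<=` cdisc q lam.
  move=> z [/andP [z1 z2] /andP [z3 z4]]; rewrite /cdisc /=.
  apply: dist_le; first exact: ltW.
  have e1 : (q.1 - z.1) ^+ 2 <= (lam / 2) ^+ 2 by apply: sq_bound; apply/andP; split; lra.
  have e2 : (q.2 - z.2) ^+ 2 <= (lam / 2) ^+ 2 by apply: sq_bound; apply/andP; split; lra.
  nra.
pose PR := fun j => j != 0 /\ exists i, i != 0 /\ tile p a1 i j `<=` cdisc q lam.
have [a3 [[a3n [i1 [i1n Ti1]]] a3min]] : exists j, PR j /\ forall k, PR k -> j <= k.
  apply: (int_min _ (Num.floor ((q.2 - lam - p.2) * a1%:R))).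
    by exists j0; split => //; exists i0.
  move=> j [_ [i [_ Ti]]]; apply: idx_lb => //; exact: (corner _ _ _ _ _ _ _ Ti).2.
pose PC := fun i => i != 0 /\ tile p a1 i a3 `<=` cdisc q lam.
have [a2 [[a2n Ta] a2min]] : exists i, PC i /\ forall k, PC k -> i <= k.
  apply: (int_min _ (Num.floor ((q.1 - lam - p.1) * a1%:R))).
    by exists i1.
  move=> i [_ Ti]; apply: idx_lb => //; exact: (corner _ _ _ _ _ _ _ Ti).1.
exists a2, a3; split => // i j i0' j0' Tij.
have := a3min j (conj j0' (ex_intro _ i (conj i0' Tij))).
rewrite le_eqVlt => /orP [/eqP e|]; last by left.
right; split => //; apply: a2min; split => //; by rewrite e.
Qed.

End GT6.

Theorem lemma2p1 (R : realType) (c : R) : 1 < c ->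
  exists C : R, forall (v0 : seq (pt R)) (obs : seq (seq (pt R))) (p q : pt R) (L : R),
    regular_terrain c v0 obs ->
    terrain v0 obs p ->
    interior_of (terrain v0 obs) q ->
    shortest_path_length (terrain v0 obs) p q L ->
    let lam := accessibility (terrain v0 obs) q in
    let a1 := adv_a1 lam in
    (exists a2 a3, advice_tile p q lam a1 a2 a3) /\
    (forall a2 a3, advice_tile p q lam a1 a2 a3 ->
       (size (Code a1 a2 a3))%:R <= C * (1 + ln (Num.max L 1 / lam))).
Proof.
move=> _.
have ln2 : 0 < ln (2:R) by apply: ln_gt0; rewrite ltr1n.
have ln7 : 0 <= ln (7:R) by apply: ln_ge0; rewrite ler1n.
set w := (ln (2:R))^-1.
have w0 : 0 <= w by rewrite invr_ge0 ltW.
exists (14 + 6 * ln 7 * w + 6 * w).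
move=> v0 obs p q L _ _ qint sp lam a1.
have sub : terrain v0 obs `<=` conv_hull v0 by move=> z [].
have [l0 l1] := lam_pos _ _ _ _ sub qint.
rewrite -/lam in l0 l1.
have c0 : 0 < 2 / lam by rewrite divr_gt0.
have cge := ceil_ge (2 / lam).
have clt := ceilB1_lt (2 / lam).
have A_eq : (a1%:R : R) = (Num.ceil (2 / lam))%:~R.
  rewrite /a1 /adv_a1 natr_absz intr_norm ger0_norm //.
  by apply: le_trans cge; apply: ltW.
have A1 : 2 / lam <= a1%:R by rewrite A_eq.
have A2 : a1%:R < 2 / lam + 1 by rewrite A_eq; move: clt; rewrite intrB rmorph1; lra.
have a0 : (0 < a1)%N by rewrite -(ltr0n R); lra.
have ha : 1 / a1%:R <= lam / 2.
  rewrite -[lam / 2]invf_div div1r lef_pV2 // posrE ?ltr0n //.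
split; first exact: adv_exists.
move=> a2 a3 [a2n a3n Ta _].
have [cx cy] := corner _ _ _ _ _ _ _ Ta.
have Lg := L_ge _ _ _ _ _ sp.
have d1 := dist_ge1 _ q p; have d2 := dist_ge2 _ q p.
have L0 : 0 <= L by apply: le_trans Lg; apply: le_trans d1; exact: normr_ge0.
set M := Num.max L 1.
have LM : L <= M by rewrite le_max lexx.
have M1 : 1 <= M by rewrite le_max lexx orbT.
set il := lam^-1.
have il1 : 1 <= il by rewrite invr_ge1 // unitfE gt_eqF.
have ilx : lam * il = 1 by rewrite mulfV // gt_eqF.
set x := M / lam.
have xe : x = M * il by [].
have x1 : 1 <= x by rewrite xe; nra.
have Ail : a1%:R <= 3 * il.
  have e2 : 2 / lam = 2 * il by [].
  rewrite e2 in A2; lra.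
have B1 : a1%:R <= 7 * x by nra.
have B2 : (`|a2|%N)%:R <= 7 * x.
  have h := idx_abs _ p.1 a1 a2 a0.
  have t1 : `|tile_lo p.1 a1 a2 - p.1| <= 1 + L.
    move: cx d1; rewrite -normrN opprB => cx' d1'.
    have := ler_normD (tile_lo p.1 a1 a2 - q.1) (q.1 - p.1).
    rewrite addrA subrK; lra.
  have t2 : 0 <= `|tile_lo p.1 a1 a2 - p.1| by exact: normr_ge0.
  nra.
have B3 : (`|a3|%N)%:R <= 7 * x.
  have h := idx_abs _ p.2 a1 a3 a0.
  have t1 : `|tile_lo p.2 a1 a3 - p.2| <= 1 + L.
    move: cy d2; rewrite -normrN opprB => cy' d2'.
    have := ler_normD (tile_lo p.2 a1 a3 - q.2) (q.2 - p.2).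
    rewrite addrA subrK; lra.
  have t2 : 0 <= `|tile_lo p.2 a1 a3 - p.2| by exact: normr_ge0.
  nra.
have s1 := binrep_real _ _ _ x1 B1.
have s2 := binrep_real _ _ _ x1 B2.
have s3 := binrep_real _ _ _ x1 B3.
have y0 : 0 <= ln x by apply: ln_ge0.
rewrite size_Code 3!natrD !natrM.
set y := ln x in s1 s2 s3 y0 *.
have e : (ln 7 + y) / ln 2 = (ln 7 + y) * w by [].
rewrite e in s1 s2 s3; clear e.
move: s1 s2 s3 y0 w0 ln7.
move: ((size (binrep a1))%:R : R) ((size (binrep `|a2|%N))%:R : R) ((size (binrep `|a3|%N))%:R : R) (ln (7:R)) y w.
clear => S1 S2 S3 L7 Y W s1 s2 s3 y0 w0 l7.
have : 0 <= W * Y by apply: mulr_ge0.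
have : 0 <= L7 * W * Y by rewrite mulr_ge0 // mulr_ge0.
nra.

Qed.
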